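(* Let $n\ge 4$ and let $W_n$ be the wheel graph on $n$ vertices, with incidence matrix \[M=\left[\begin{array}{c|c} \mathbf{1}^T & \mathbf{0}^T \\ \hline I_{n-1} & C \end{array}\right],\] where $C$ is the circulant matrix $\mathrm{circ}(1,0,\ldots,0,1)$ of order $n-1$. Then $CC^T+I_{n-1}$ is invertible and the Moore–Penrose inverse of $M$ is \[M^+=\frac{1}{2(n-1)} \left[\begin{array}{r|c} 2\mathbf{1} & X \\ \hline -\mathbf{1} & Y \end{array}\right],\] where $X=2(CC^T+I_{n-1})^{-1}\left[ (n-1)I_{n-1}-J_{n-1}\right]$ and $Y= J_{n-1}+C^TX$.
   Context: The wheel graph $W_n$ ($n\ge4$) is obtained from a cycle on $n-1$ vertices and an extra vertex $v$ by joining $v$ to every vertex of the cycle. The (vertex-edge) incidence matrix of a graph has $(i,j)$-entry $1$ if vertex $i$ is incident with edge $e_j$ and $0$ otherwise; the displayed block form corresponds to listing the hub $v$ first, then the cycle vertices $1,\dots,n-1$ in cyclic order, and listing the $n-1$ spokes first (spoke $j$ joining $v$ to cycle vertex $j$) followed by the cycle edges. For $c_0,\dots,c_{k-1}$, $\mathrm{circ}(c_0,c_1,\ldots,c_{k-1})$ denotes the $k\times k$ circulant matrix whose $(i,j)$-entry is $c_{(j-i)\bmod k}$ (first row $c_0,\dots,c_{k-1}$, each subsequent row the cyclic right shift of the previous). $\mathbf{1}$ is the all-ones column vector of length $n-1$, $\mathbf{0}$ the zero vector, $J_{n-1}$ the $(n-1)\times(n-1)$ all-ones matrix, $I_{n-1}$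 the identity. The Moore–Penrose inverse $A^+$ of a real matrix $A$ is the unique matrix satisfying $AA^+A=A$, $A^+AA^+=A^+$, $(AA^+)^T=AA^+$, $(A^+A)^T=A^+A$. *)

(* Defs.v *)
From HB Require Import structures.
From mathcomp Require Import all_boot all_order all_algebra.
Set Implicit Arguments. Unset Strict Implicit. Unset Printing Implicit Defensive.
Import Order.TTheory GRing.Theory Num.Theory.
Local Open Scope ring_scope.

Definition circ (R : nzRingType) (k : nat) (c : nat -> R) : 'M[R]_k :=
  \matrix_(i < k, j < k) c ((j + k - i) %% k)%N.

Definition wheelC (R : nzRingType) (k : nat) : 'M[R]_k :=
  circ k (fun t => if (t == 0)%N || (t == k.-1)%N then 1 else 0).

(* Incidence matrix of the wheel W_n (block form, m = n-1):
   rows: hub, then cycle vertices 1..m; columns: m spokes, then m cycle edges. *)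
Definition wheel_incidence (R : nzRingType) (n : nat) :
  'M[R]_(1 + n.-1, n.-1 + n.-1) :=
  block_mx (const_mx 1) (const_mx 0) (1%:M) (wheelC R n.-1).

Definition is_MP_inverse (R : nzRingType) (p q : nat)
  (A : 'M[R]_(p, q)) (B : 'M[R]_(q, p)) : Prop :=
  [/\ A *m B *m A = A, B *m A *m B = B,
      (A *m B)^T = A *m B & (B *m A)^T = B *m A].

Definition wheel_X (R : fieldType) (n : nat) : 'M[R]_(n.-1) :=
  let C := wheelC R n.-1 in
  2%:R *: (invmx (C *m C^T + 1%:M) *m ((n.-1)%:R *: 1%:M - const_mx 1)).

Definition wheel_Y (R : fieldType) (n : nat) : 'M[R]_(n.-1) :=
  const_mx 1 + (wheelC R n.-1)^T *m wheel_X R n.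

Definition wheel_pinv (R : fieldType) (n : nat) :
  'M[R]_(n.-1 + n.-1, 1 + n.-1) :=
  (2 * (n.-1)%:R)^-1 *:
    block_mx (2%:R *: const_mx 1) (wheel_X R n) (- const_mx 1) (wheel_Y R n).

(* Main.v *)
Require Import Defs.
From HB Require Import structures.
From mathcomp Require Import all_boot all_order all_algebra.
From mathcomp Require Import zify ring.
Import Order.TTheory GRing.Theory Num.Theory.
Local Open Scope ring_scope.

Lemma l1 m i j : (2 <= m)%N -> (i < m)%N -> (j < m)%N -> ((j+m-i)%%m == 0)%N = (i == j).
Proof.
move=> hm hi hj; case: (leqP i j) => h.
- have -> : (j + m - i = (j - i) + m)%N by lia.
  rewrite modnDr modn_small; lia.
- rewrite modn_small; lia.
Qed.
Lemma l2 m i j : (2 <= m)%N -> (i < m)%N -> (j < m)%N -> ((j+m-i)%%m == m.-1)%N = ((i+m).-1 %% m == j)%N.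
Proof.
move=> hm hi hj; case: (leqP i j) => h.
- have -> : (j + m - i = (j - i) + m)%N by lia.
  rewrite modnDr modn_small; last lia.
  case: i hi h => [|i] hi h.
  + rewrite add0n modn_small; lia.
  + have -> : ((i.+1 + m).-1 = i + m)%N by lia. rewrite modnDr modn_small; lia.
- rewrite (modn_small (_ : j + m - i < m)%N); last lia.
  case: i hi h => [|i] hi h; first lia.
  have -> : ((i.+1 + m).-1 = i + m)%N by lia. rewrite modnDr modn_small; lia.
Qed.

Lemma mul_const_r (R : pzSemiRingType) p m q (M : 'M[R]_(p,m)) (a : R) :
  M *m (const_mx a : 'M_(m,q)) = \matrix_(i,j) ((\sum_k M i k) * a).
Proof. by apply/matrixP => i j; rewrite !mxE big_distrl; apply: eq_bigr => k _; rewrite mxE. Qed.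
Lemma mul_const_l (R : pzSemiRingType) p m q (M : 'M[R]_(m,q)) (a : R) :
  (const_mx a : 'M_(p,m)) *m M = \matrix_(i,j) (a * (\sum_k M k j)).
Proof. by apply/matrixP => i j; rewrite !mxE big_distrr; apply: eq_bigr => k _; rewrite mxE. Qed.

Section W.
Variable R : realFieldType.
Variable m : nat.
Hypothesis hm : (2 <= m)%N.

Local Notation C := (wheelC R m).

Lemma Centry (i j : 'I_m) : C i j = (i == j)%:R + (ord_pred i == j)%:R.
Proof.
rewrite /wheelC /circ mxE.
have e1 := @l1 m i j hm (ltn_ord i) (ltn_ord j).
have e2 := @l2 m i j hm (ltn_ord i) (ltn_ord j).
have -> : (ord_pred i == j) = ((i + m).-1 %% m == j)%N by [].
rewrite e1 e2.
have -> : (i == j) = (nat_of_ord i == nat_of_ord j) by [].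
case: eqP => [E|E]; case: eqP => [E'|E'] //=; rewrite ?addr0 ?add0r //.
exfalso; move: E'; rewrite -E; have hi := ltn_ord i; case: (posnP i) => h0.
- rewrite h0 add0n modn_small; lia.
- have -> : ((i + m).-1 = i.-1 + m)%N by lia. rewrite modnDr modn_small; lia.
Qed.

Lemma sum_delta (a : 'I_m) : \sum_(j : 'I_m) ((a == j)%:R : R) = 1.
Proof.
rewrite (bigD1 a) //= eqxx big1 ?addr0 // => k /negbTE.
by rewrite eq_sym => ->.
Qed.

Lemma rowsumC (i : 'I_m) : \sum_j C i j = 2%:R.
Proof.
under eq_bigr do rewrite Centry.
by rewrite big_split /= !sum_delta.
Qed.

Lemma colsumC (j : 'I_m) : \sum_i C i j = 2%:R.
Proof.
under eq_bigr do rewrite Centry.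
rewrite big_split /=.
under eq_bigr do rewrite eq_sym.
rewrite sum_delta.
have -> : \sum_(i : 'I_m) ((ord_pred i == j)%:R : R) = \sum_(i : 'I_m) ((ordS j == i)%:R).
  apply: eq_bigr => i _; congr (_%:R).
  case: eqP => [<-|h]; first by rewrite ord_predK eqxx.
  case: eqP => // h2; exfalso; apply: h; by rewrite -h2 ordSK.
by rewrite sum_delta.
Qed.

Lemma C_const p (a : R) : C *m (const_mx a : 'M_(m,p)) = const_mx (2%:R * a).
Proof.
rewrite mul_const_r; apply/matrixP => i j.
by rewrite [LHS]mxE rowsumC [RHS]mxE.
Qed.

Lemma Ct_const p (a : R) : C^T *m (const_mx a : 'M_(m,p)) = const_mx (2%:R * a).
Proof.
rewrite mul_const_r; apply/matrixP => i j.
rewrite [LHS]mxE [RHS]mxE.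
under eq_bigr do rewrite [C^T _ _]mxE.
by rewrite colsumC.
Qed.

Lemma const_C p (a : R) : (const_mx a : 'M_(p,m)) *m C = const_mx (2%:R * a).
Proof.
rewrite mul_const_l; apply/matrixP => i j.
by rewrite [LHS]mxE colsumC [RHS]mxE mulrC.
Qed.

Lemma const_Ct p (a : R) : (const_mx a : 'M_(p,m)) *m C^T = const_mx (2%:R * a).
Proof.
rewrite mul_const_l; apply/matrixP => i j.
rewrite [LHS]mxE [RHS]mxE.
under eq_bigr do rewrite [C^T _ _]mxE.
by rewrite rowsumC mulrC.
Qed.

End W.

Lemma const_const (R : pzSemiRingType) p m q (a b : R) :
  (const_mx a : 'M_(p,m)) *m (const_mx b : 'M_(m,q)) = const_mx ((a * b) *+ m).
Proof.
apply/matrixP => i j; rewrite !mxE.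
under eq_bigr do rewrite !mxE.
by rewrite sumr_const card_ord.
Qed.

Lemma const_add (R : nmodType) p q (a b : R) :
  (const_mx a : 'M_(p,q)) + const_mx b = const_mx (a + b).
Proof. by apply/matrixP => i j; rewrite !mxE. Qed.

Lemma trD (R : nmodType) p q (A B : 'M[R]_(p,q)) : (A + B)^T = A^T + B^T.
Proof. by apply/matrixP => i j; rewrite !mxE. Qed.
Lemma trN (R : zmodType) p q (A : 'M[R]_(p,q)) : (- A)^T = - A^T.
Proof. by apply/matrixP => i j; rewrite !mxE. Qed.
Lemma trZ (R : pzSemiRingType) p q (a : R) (A : 'M[R]_(p,q)) : (a *: A)^T = a *: A^T.
Proof. by apply/matrixP => i j; rewrite !mxE. Qed.

Lemma trZn (R : nzRingType) p q (a : R) (A : 'M[R]_(p,q)) : (a *: A)^T = a *: A^T.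
Proof. by apply/matrixP => i j; rewrite !mxE. Qed.

Lemma unitA (R : realFieldType) m (C : 'M[R]_m) : (C *m C^T + 1%:M) \in unitmx.
Proof.
have ker0 (v : 'rV[R]_m) : v *m (C *m C^T + 1%:M) = 0 -> v = 0.
  move=> hv.
  have h0 : (v *m (C *m C^T + 1%:M) *m v^T) 0 0 = 0 by rewrite hv mul0mx mxE.
  rewrite mulmxDr mulmx1 mulmxDl mulmxA -mulmxA -trmx_mul mxE in h0.
  rewrite !mxE in h0.
  have p1 : 0 <= \sum_j (v *m C) 0 j * ((v *m C)^T) j 0.
    by apply: sumr_ge0 => j _; rewrite [(v *m C)^T _ _]mxE -expr2 sqr_ge0.
  have p2 : 0 <= \sum_j v 0 j * (v^T) j 0.
    by apply: sumr_ge0 => j _; rewrite mxE -expr2 sqr_ge0.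
  move/eqP: h0; rewrite paddr_eq0 // => /andP [_ /eqP h2].
  apply/matrixP => i j; rewrite ord1 [RHS]mxE.
  have hj : v 0 j * v^T j 0 = 0.
    by apply: (psumr_eq0P _ h2) => // k _; rewrite mxE -expr2 sqr_ge0.
  by move/eqP: hj; rewrite mxE -expr2 sqrf_eq0 => /eqP.
rewrite -row_free_unit -kermx_eq0; apply/eqP.
apply/row_matrixP => i; rewrite row0; apply: ker0.
by rewrite -row_mul mulmx_ker row0.
Qed.

Theorem mainTheorem1 (R : realFieldType) (n : nat) (hn : (4 <= n)%N) :
  let C := wheelC R n.-1 in
  (C *m C^T + 1%:M) \in unitmx /\
  is_MP_inverse (wheel_incidence R n) (wheel_pinv R n).
Proof.
move=> C; rewrite /C /is_MP_inverse /wheel_pinv /wheel_Y /wheel_X /wheel_incidence {C}.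
have : (2 <= n.-1)%N by lia.
move: (n.-1) => m hm.
set C := wheelC R m.
set A := C *m C^T + 1%:M.
set K := invmx A.
set J := const_mx 1 : 'M[R]_m.
have hA : A \in unitmx by apply: unitA.
split => //.
have AK : A *m K = 1%:M by apply: mulmxV.
have KA : K *m A = 1%:M by apply: mulVmx.
have AT : A^T = A by rewrite /A trD trmx_mul trmxK trmx1.
have KT : K^T = K by rewrite /K trmx_inv AT.
have h5 : (5%:R : R) != 0 by rewrite pnatr_eq0.
have hm0 : (m%:R : R) != 0 by rewrite pnatr_eq0; lia.
have h2 : (2%:R : R) != 0 by rewrite pnatr_eq0.
have A_const p (a : R) : A *m (const_mx a : 'M_(m,p)) = const_mx (5%:R * a).
  rewrite /A mulmxDl -mulmxA Ct_const // C_const // mul1mx const_add; congr const_mx; ring.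
have const_A p (a : R) : (const_mx a : 'M_(p,m)) *m A = const_mx (5%:R * a).
  rewrite /A mulmxDr mulmxA const_C // const_Ct // mulmx1 const_add; congr const_mx; ring.
have K_const p (a : R) : K *m (const_mx a : 'M_(m,p)) = const_mx (a / 5%:R).
  have := A_const p (a / 5%:R); rewrite [5%:R * _]mulrC divfK // => <-.
  by rewrite mulmxA KA mul1mx.
have const_K p (a : R) : (const_mx a : 'M_(p,m)) *m K = const_mx (a / 5%:R).
  have := const_A p (a / 5%:R); rewrite [5%:R * _]mulrC divfK // => <-.
  by rewrite -mulmxA AK mulmx1.
set X := 2 *: (K *m (m%:R *: 1%:M - J)).
have AX : A *m X = 2 *: (m%:R *: 1%:M - J) by rewrite /X -scalemxAr mulmxA AK mul1mx.
have XT : X^T = X.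
  rewrite /X trZ trmx_mul KT trD trN !scalemx1 tr_scalar_mx trmx_const; congr (_ *: _).
  by rewrite mulmxBl mulmxBr scalar_mxC K_const const_K.
set M := block_mx (const_mx 1) (const_mx 0) 1%:M C.
set B := block_mx (2 *: const_mx 1) X (- const_mx 1) (J + C^T *m X).
have MB : M *m B = (2 * m%:R)%:M.
  rewrite /M /B mulmx_block scalar_mx_block; congr block_mx.
  - rewrite -scalemxAr const_const mul0mx addr0 scalemx_const.
    apply/matrixP => i j; rewrite !ord1 !mxE eqxx /=; ring.
  - rewrite mul0mx addr0 /X -scalemxAr mulmxA const_K mulmxBr -scalemxAr mulmx1 const_const.
    apply/matrixP => i j; rewrite !mxE; ring.
  - by rewrite mul1mx mulmxN C_const // scalemx_const subrr.
  - rewrite mul1mx mulmxDr C_const // mulmxA addrCA.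
    have -> : X + C *m C^T *m X = A *m X by rewrite /A mulmxDl mul1mx addrC.
    rewrite AX; apply/matrixP => i j; rewrite !mxE.
    case: (i == j) => /=; ring.
set P := (2 * m%:R)^-1 *: B.
have MP : M *m P = 1%:M.
  by rewrite /P -scalemxAr MB scale_scalar_mx mulVf // mulf_neq0.
split.
- by rewrite MP mul1mx.
- by rewrite -mulmxA MP mulmx1.
- by rewrite MP trmx1.
rewrite /P -scalemxAl. rewrite trZn; congr (_ *: _).
rewrite /B /M mulmx_block tr_block_mx; congr block_mx.
- by rewrite -scalemxAl const_const scalemx_const mulmx1 trD trmx_const XT.
- rewrite mulmx1 mulmx0 add0r mulNmx const_const mulr1 mulr1n addKr.
  by rewrite trmx_mul trmxK XT.
- rewrite mulmx0 add0r mulmx1 mulNmx const_const mulr1 mulr1n addKr.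
  by rewrite trmx_mul XT.
- rewrite !mulmx0 !add0r mulmxDl const_C // trD trmx_const.
  by rewrite !trmx_mul trmxK XT mulmxA.
Qed.
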